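(* Let $(X,\mu)$ and $(Y,\nu)$ be probability spaces and $R$ a measure on $X\times Y$. For $\phi\colon Y\to\mathbb{R}$ let $$\phi^+(x)=\ln\Big(\int_Y e^{\phi(y)}\,R(dx,dy)/\mu(dx)\Big)$$ (a Radon--Nikodym derivative, assumed well-defined). Let $F(\phi)=\int_X\phi^+\,d\mu$ and let $F^*$ be its convex conjugate. Let $\phi,\widetilde\phi\colon Y\to\mathbb{R}$ be two potentials. Set $$\pi(dx,dy)=e^{\phi(y)-\phi^+(x)}R(dx,dy),\qquad \widetilde\pi(dx,dy)=e^{\widetilde\phi(y)-\widetilde\phi^+(x)}R(dx,dy),$$ and let $\rho$ and $\widetilde\rho$ be their respective $Y$-marginals. Then $$F(\phi|\widetilde\phi)=F^*(\widetilde\rho|\rho)=H(\widetilde\pi|\pi),$$ where $H(\widetilde\pi|\pi)=\iint\ln(\widetilde\pi/\pi)\,d\widetilde\pi$.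
   Context: For a differentiable convex functional $G$, its Bregman divergence is $$G(a|b)=G(a)-G(b)-\langle G'(b),a-b\rangle,$$ where $G'$ is the derivative (first variation) and $\langle\cdot,\cdot\rangle$ is the pairing between functions and measures, $\langle\phi,\rho\rangle=\int\phi\,d\rho$. The convex conjugate is $F^*(\rho)=\sup_\phi\langle\phi,\rho\rangle-F(\phi)$. One has $F'(\phi)=\rho$ and $F'(\widetilde\phi)=\widetilde\rho$, and the $X$-marginals of $\pi$ and $\widetilde\pi$ are $\mu$. *)

(* Defs.v *)
From HB Require Import structures.
From mathcomp Require Import all_boot all_order all_algebra.
From mathcomp Require Import all_classical all_reals all_analysis.
Set Implicit Arguments. Unset Strict Implicit. Unset Printing Implicit Defensive.
Import Order.TTheory GRing.Theory Num.Theory.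
Local Open Scope classical_set_scope.
Local Open Scope ring_scope.
Local Open Scope ereal_scope.

Section defs.
Context {R : realType} {d1 d2 : measure_display}
  {X : measurableType d1} {Y : measurableType d2}.

(* [psip] is a version of psi^+ (x) = ln ( \int_Y e^{psi y} R(dx,dy) / mu(dx) ):
   e^{psip} is a Radon-Nikodym density of A |-> \int_{A x Y} e^{psi(y)} dR
   with respect to mu. *)
Definition is_plus (mu : {measure set X -> \bar R})
  (Rxy : {measure set (X * Y)%type -> \bar R}) (psi : Y -> R) (psip : X -> R) :=
  measurable_fun setT psip /\
  forall A, measurable A ->
    \int[Rxy]_(z in A `*` setT) (expR (psi z.2))%:E
    = \int[mu]_(x in A) (expR (psip x))%:E.

Definition Fpot (mu : {measure set X -> \bar R})
  (Rxy : {measure set (X * Y)%type -> \bar R}) (psi : Y -> R) : \bar R :=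
  match pselect (exists psip, is_plus mu Rxy psi psip) with
  | left h => \int[mu]_x (projT1 (cid h) x)%:E
  | right _ => +oo
  end.

Definition admissible (mu : {measure set X -> \bar R})
  (Rxy : {measure set (X * Y)%type -> \bar R})
  (rho : {measure set Y -> \bar R}) (psi : Y -> R) :=
  measurable_fun setT psi /\
  rho.-integrable setT (EFin \o psi) /\
  exists psip, is_plus mu Rxy psi psip /\ mu.-integrable setT (EFin \o psip).

Definition Fstar (mu : {measure set X -> \bar R})
  (Rxy : {measure set (X * Y)%type -> \bar R})
  (rho : {measure set Y -> \bar R}) : \bar R :=
  ereal_sup [set \int[rho]_y (psi y)%:E - Fpot mu Rxy psi
            | psi in admissible mu Rxy rho].
End defs.

Definition density_of {R : realType} {d} {T : measurableType d}
  (P Q : {measure set T -> \bar R}) (f : T -> R) :=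
  measurable_fun setT f /\ (forall z, (0 <= f z)%R) /\
  forall A, measurable A -> P A = \int[Q]_(z in A) (f z)%:E.

Definition relent {R : realType} {d} {T : measurableType d}
  (P Q : {measure set T -> \bar R}) : \bar R :=
  match pselect (exists f, density_of P Q f) with
  | left h => \int[P]_z (ln (projT1 (cid h) z))%:E
  | right _ => +oo
  end.

(* Main.v *)
Require Import Defs.
From HB Require Import structures.
From mathcomp Require Import all_boot all_order all_algebra.
From mathcomp Require Import all_classical all_reals all_analysis.
From mathcomp Require Import measurable_realfun ring lra.
Import Order.TTheory GRing.Theory Num.Theory.
Import HBNNSimple.
Local Open Scope classical_set_scope.
Local Open Scope ring_scope.
Local Open Scope ereal_scope.

Lemma piece d (T : measurableType d) (R : realType) (m : {measure set T -> \bar R})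
  (w : T -> R) (S : set T) (y : R) :
  measurable S -> measurable_fun setT w -> (forall x, 0 <= w x)%R -> (0 <= y)%R ->
  \int[m]_x ((y * \1_S x)%:E * (w x)%:E) = y%:E * \int[m]_(x in S) (w x)%:E.
Proof.
move=> mS mw w0 y0.
under eq_integral => x _ do rewrite EFinM -muleA.
rewrite ge0_integralZl//; try by move=> x _; rewrite mule_ge0// lee_fin.
congr (_ * _); rewrite [RHS]integral_mkcond epatch_indic; apply: eq_integral => x _ /=.
  by rewrite muleC.
apply: emeasurable_funM; apply/measurable_EFinP => //.
Qed.

Section transfer.
Context d1 d2 (T1 : measurableType d1) (T2 : measurableType d2) (R : realType).
Variables (m1 : {measure set T1 -> \bar R}) (m2 : {measure set T2 -> \bar R}).
Variables (p : T1 -> T2) (w1 : T1 -> R) (w2 : T2 -> R).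
Hypotheses (mp : measurable_fun setT p) (mw1 : measurable_fun setT w1)
  (mw2 : measurable_fun setT w2) (w10 : forall x, (0 <= w1 x)%R)
  (w20 : forall x, (0 <= w2 x)%R).
Hypothesis hA : forall A, measurable A ->
  \int[m1]_(z in p @^-1` A) (w1 z)%:E = \int[m2]_(x in A) (w2 x)%:E.

Lemma simple_transfer (h : {nnsfun T2 >-> R}) :
  \int[m1]_z ((h (p z))%:E * (w1 z)%:E) = \int[m2]_x ((h x)%:E * (w2 x)%:E).
Proof.
have hge0 y : y \in range h -> (0 <= y)%R.
  by rewrite inE => -[t _ <-].
transitivity (\int[m1]_z (\sum_(y \in range h)
    ((y * \1_(p @^-1` (h @^-1` [set y])) z)%:E * (w1 z)%:E))).
  apply: eq_integral => z _.
  rewrite (fimfunE h (p z)) -fsumEFin // ge0_mule_fsuml //.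
  by move=> y; exact: nnfun_muleindic_ge0.
transitivity (\int[m2]_x (\sum_(y \in range h)
    ((y * \1_(h @^-1` [set y]) x)%:E * (w2 x)%:E))); last first.
  apply: eq_integral => z _.
  rewrite (fimfunE h z) -fsumEFin // ge0_mule_fsuml //.
  by move=> y; exact: nnfun_muleindic_ge0.
rewrite ge0_integral_fsum //; last 2 first.
- move=> y; apply: emeasurable_funM; apply/measurable_EFinP => //.
  apply: measurable_funM => //; apply: measurable_indic.
  by rewrite -[X in measurable X]setTI; apply: mp.
- move=> y z _; rewrite -EFinM lee_fin mulr_ge0// indicE.
  have [/set_mem/= <-|_] := boolP (z \in _); last by rewrite mulr0.
  by rewrite mulr1.
rewrite ge0_integral_fsum //; last 2 first.
- move=> y; apply: emeasurable_funM; apply/measurable_EFinP => //.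
  by apply: measurable_funM => //; apply: measurable_indic.
- move=> y z _; rewrite -EFinM lee_fin mulr_ge0// indicE.
  have [/set_mem/= <-|_] := boolP (z \in _); last by rewrite mulr0.
  by rewrite mulr1.
apply: eq_fsbigr => y yh.
have y0 : (0 <= y)%R.
  exact: hge0.
rewrite !piece//.
- by rewrite hA.
- by rewrite -[X in measurable X]setTI; apply: mp.
Qed.

Lemma transfer (f : T2 -> \bar R) : measurable_fun setT f -> (forall x, 0 <= f x) ->
  \int[m1]_z (f (p z) * (w1 z)%:E) = \int[m2]_x (f x * (w2 x)%:E).
Proof.
move=> mf f0; pose h := nnsfun_approx measurableT mf.
have L1 : \int[m1]_z (f (p z) * (w1 z)%:E) =
    limn (fun n => \int[m1]_z ((h n (p z))%:E * (w1 z)%:E)).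
  rewrite -monotone_convergence//.
  - apply: eq_integral => z _; apply/esym/cvg_lim => //; apply: cvgeZr => //.
    exact: cvg_nnsfun_approx.
  - move=> n; apply: emeasurable_funM; apply/measurable_EFinP => //.
    by apply: measurableT_comp => //.
  - by move=> n z _; rewrite -EFinM lee_fin mulr_ge0.
  - move=> z _ a b ab; rewrite lee_wpmul2r ?lee_fin //.
    exact/lefP/nd_nnsfun_approx.
have L2 : \int[m2]_x (f x * (w2 x)%:E) =
    limn (fun n => \int[m2]_x ((h n x)%:E * (w2 x)%:E)).
  rewrite -monotone_convergence//.
  - apply: eq_integral => z _; apply/esym/cvg_lim => //; apply: cvgeZr => //.
    exact: cvg_nnsfun_approx.
  - move=> n; apply: emeasurable_funM; apply/measurable_EFinP => //.
  - by move=> n z _; rewrite -EFinM lee_fin mulr_ge0.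
  - move=> z _ a b ab; rewrite lee_wpmul2r ?lee_fin //.
    exact/lefP/nd_nnsfun_approx.
rewrite L1 L2; congr (limn _); apply/funext => n.
exact: simple_transfer.
Qed.
End transfer.

Lemma marg d (T : measurableType d) d' (S : measurableType d') (R : realType)
  (m : {measure set S -> \bar R}) (p : S -> T) (nu : {measure set T -> \bar R}) :
  measurable_fun setT p -> (forall A, measurable A -> m (p @^-1` A) = nu A) ->
  forall g : T -> R, measurable_fun setT g -> nu.-integrable setT (EFin \o g) ->
  m.-integrable setT (fun z => (g (p z))%:E) /\
  \int[m]_z (g (p z))%:E = \int[nu]_x (g x)%:E.
Proof.
move=> mp hm g mg ig.
have E (f : T -> \bar R) : \int[pushforward m p]_x f x = \int[nu]_x f x.
  by apply: eq_measure_integral => A mA _; exact: hm.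
have mgp : measurable_fun setT (fun z => (g (p z))%:E).
  by apply/measurable_EFinP; exact: measurableT_comp.
have ip : m.-integrable setT (fun z => (g (p z))%:E).
  apply/integrableP; split => //.
  have := @ge0_integral_pushforward _ _ _ _ _ p mp m setT (fun x => `|(g x)%:E|)
    measurableT.
  rewrite preimage_setT => <- //.
  - by rewrite E; case/integrableP: ig.
  - by apply: measurableT_comp => //; apply/measurable_EFinP.
split => //.
by rewrite -E integral_pushforward //; apply/measurable_EFinP.
Qed.

Section main.
Context (R : realType) d1 d2 (X : measurableType d1) (Y : measurableType d2)
  (mu : probability X R) (Rxy : {measure set (X * Y)%type -> \bar R}).

Lemma L1 psi psip : measurable_fun setT psi -> is_plus mu Rxy psi psip ->
  forall g : X -> \bar R, measurable_fun setT g -> (forall x, 0 <= g x) ->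
  \int[Rxy]_z (g z.1 * (expR (psi z.2))%:E) = \int[mu]_x (g x * (expR (psip x))%:E).
Proof.
move=> mpsi [mpsip hp] g mg g0.
apply: (@transfer _ _ _ _ _ Rxy mu fst (fun z => expR (psi z.2))
  (fun x => expR (psip x)) measurable_fst _ _ _ _ _ g mg g0).
- by apply: measurableT_comp => //; apply: measurableT_comp.
- by apply: measurableT_comp.
- by move=> z; exact: expR_ge0.
- by move=> z; exact: expR_ge0.
- by move=> A mA; rewrite -setXT; exact: hp.
Qed.

Lemma int1 : \int[mu]_x (1%:E : \bar R) = 1.
Proof.
rewrite integral_cst // mul1e; exact: probability_setT.
Qed.

Lemma Fpot_eq psi psip : measurable_fun setT psi -> is_plus mu Rxy psi psip ->
  Fpot mu Rxy psi = \int[mu]_x (psip x)%:E.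
Proof.
move=> mpsi hp; rewrite /Fpot; case: pselect => [h|nh]; last first.
  by exfalso; apply: nh; exists psip.
case: cid => q hq /=.
have mq := hq.1; have mpsip := hp.1.
have hae : ae_eq mu setT (fun=> 1%:E) (fun x => (expR (q x - psip x))%:E).
  apply: integral_ae_eq => //.
  - exact: finite_measure_integrable_cst.
  - apply/measurable_EFinP; apply: measurableT_comp => //; exact: measurable_funB.
  move=> E _ mE.
  transitivity (\int[mu]_x ((\1_E x * expR (- psip x))%:E * (expR (psip x))%:E)).
    under [RHS]eq_integral => x _ do rewrite -EFinM -mulrA -expRD addNr expR0 mulr1.
    by rewrite integral_indic // setIT integral_cst // mul1e.
  rewrite -(@L1 psi psip mpsi hp); last 2 first.
  - apply/measurable_EFinP; apply: measurable_funM; first exact: measurable_indic.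
    by apply: measurableT_comp => //; apply: measurableT_comp.
  - by move=> x; rewrite lee_fin mulr_ge0 // ?expR_ge0 // indicE.
  rewrite (@L1 psi q mpsi hq (fun x => (\1_E x * expR (- psip x))%:E)); last 2 first.
  - apply/measurable_EFinP; apply: measurable_funM; first exact: measurable_indic.
    by apply: measurableT_comp => //; apply: measurableT_comp.
  - by move=> x; rewrite lee_fin mulr_ge0 // ?expR_ge0 // indicE.
  rewrite integral_mkcond; apply: eq_integral => x _.
  rewrite patchE; case: ifPn => xE.
    by rewrite indicE xE mul1r -EFinM -expRD addrC.
  by rewrite indicE (negbTE xE) mul0r mul0e.
apply: ae_eq_integral => //.
- by apply/measurable_EFinP.
- by apply/measurable_EFinP.
apply: filterS hae => x h1 hx; move: (h1 hx) => /esym [] /(congr1 (@ln R)).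
by rewrite expRK ln1 => /eqP; rewrite subr_eq0 => /eqP ->.
Qed.

Section pi.
Variables (phi : Y -> R) (phip : X -> R) (pi : {measure set (X * Y)%type -> \bar R}).
Hypotheses (mphi : measurable_fun setT phi) (hp : is_plus mu Rxy phi phip).
Hypothesis hpi : forall A, measurable A ->
  pi A = \int[Rxy]_(z in A) (expR (phi z.2 - phip z.1))%:E.

Let mphip : measurable_fun setT phip := hp.1.

Lemma me : measurable_fun setT (fun z : X * Y => expR (phi z.2 - phip z.1)).
Proof.
apply: measurableT_comp => //; apply: measurable_funB.
- exact: measurableT_comp mphi measurable_snd.
- exact: measurableT_comp mphip measurable_fst.
Qed.

Lemma pi_dens (g : X * Y -> \bar R) : measurable_fun setT g -> (forall z, 0 <= g z) ->
  \int[pi]_z g z = \int[Rxy]_z (g z * (expR (phi z.2 - phip z.1))%:E).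
Proof.
move=> mg g0.
have := @transfer _ _ _ _ _ Rxy pi id (fun z => expR (phi z.2 - phip z.1))
  (fun=> 1%R) (@measurable_id _ _ setT) me (measurable_cst _) (fun z => expR_ge0 _)
  (fun=> ler01) _ g mg g0.
move=> /(_ _) H; rewrite H.
  by apply: eq_integral => z _; rewrite mule1.
by move=> A mA; rewrite integral_cst // mul1e -hpi.
Qed.

Lemma pi_X A : measurable A -> pi (A `*` setT) = mu A.
Proof.
move=> mA; rewrite hpi; last exact: measurableX.
transitivity (\int[Rxy]_z ((\1_A z.1 * expR (- phip z.1))%:E * (expR (phi z.2))%:E)).
  rewrite setXT integral_mkcond; apply: eq_integral => z _; rewrite epatch_indic /=.
  change (\1_(fst @^-1` A) z) with (\1_A z.1 : R).
  by rewrite -!EFinM expRD; congr EFin; ring.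
rewrite (@L1 phi phip mphi hp (fun x => (\1_A x * expR (- phip x))%:E)); last 2 first.
- apply/measurable_EFinP; apply: measurable_funM; first exact: measurable_indic.
  by apply: measurableT_comp => //; apply: measurableT_comp.
- by move=> x; rewrite lee_fin mulr_ge0 // ?expR_ge0 // indicE.
under eq_integral => x _ do rewrite -EFinM -mulrA -expRD addNr expR0 mulr1.
by rewrite integral_indic // setIT.
Qed.

Lemma pi_T : pi setT = 1.
Proof. by rewrite -setXTT pi_X //; exact: probability_setT. Qed.

Lemma marg_X g : measurable_fun setT g -> mu.-integrable setT (EFin \o g) ->
  pi.-integrable setT (fun z => (g z.1)%:E) /\
  \int[pi]_z (g z.1)%:E = \int[mu]_x (g x)%:E.
Proof.
move=> mg ig; apply: (@marg _ _ _ _ _ pi fst mu measurable_fst) => // A mA.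
by rewrite -setXT pi_X.
Qed.

Lemma pi_expk psi psip : measurable_fun setT psi -> is_plus mu Rxy psi psip ->
  \int[pi]_z (expR ((psi z.2 - phi z.2) - (psip z.1 - phip z.1)))%:E = 1.
Proof.
move=> mpsi hpsi; have mpsip := hpsi.1.
rewrite pi_dens; last 2 first.
- apply/measurable_EFinP; apply: measurableT_comp => //.
  apply: measurable_funB; apply: measurable_funB.
  + exact: measurableT_comp mpsi measurable_snd.
  + exact: measurableT_comp mphi measurable_snd.
  + exact: measurableT_comp mpsip measurable_fst.
  + exact: measurableT_comp mphip measurable_fst.
- by move=> z; rewrite lee_fin expR_ge0.
transitivity (\int[Rxy]_z ((expR (- psip z.1))%:E * (expR (psi z.2))%:E)).
  apply: eq_integral => z _; rewrite -!EFinM -!expRD; congr (EFin (expR _)); ring.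
rewrite (@L1 psi psip mpsi hpsi (fun x => (expR (- psip x))%:E)); last 2 first.
- by apply/measurable_EFinP; apply: measurableT_comp => //; apply: measurableT_comp.
- by move=> x; rewrite lee_fin expR_ge0.
under eq_integral => x _ do rewrite -EFinM -expRD addNr expR0.
exact: int1.
Qed.

Variable rho : {measure set Y -> \bar R}.
Hypothesis hrho : forall B, measurable B -> rho B = pi (setT `*` B).

Lemma marg_Y g : measurable_fun setT g -> rho.-integrable setT (EFin \o g) ->
  pi.-integrable setT (fun z => (g z.2)%:E) /\
  \int[pi]_z (g z.2)%:E = \int[rho]_y (g y)%:E.
Proof.
move=> mg ig; apply: (@marg _ _ _ _ _ pi snd rho measurable_snd) => // B mB.
by rewrite -setTX hrho.
Qed.

Lemma int1pi : pi.-integrable setT (fun=> 1%:E) /\ \int[pi]_z (1%:E : \bar R) = 1.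
Proof.
have h : \int[pi]_z (1%:E : \bar R) = 1 by rewrite integral_cst // mul1e pi_T.
split => //; apply/integrableP; split => //.
by under eq_integral do rewrite abse1; rewrite h ltry.
Qed.

Lemma fin_int d (T : measurableType d) (m : {measure set T -> \bar R}) (f : T -> \bar R) :
  m.-integrable setT f -> exists r : R, \int[m]_x f x = r%:E.
Proof. by move=> /integrable_fin_num => /(_ measurableT) fr; exists (fine (\int[m]_x f x)); rewrite fineK. Qed.

Lemma gibbs psi : admissible mu Rxy rho psi ->
  rho.-integrable setT (EFin \o phi) -> mu.-integrable setT (EFin \o phip) ->
  \int[rho]_y (psi y)%:E - Fpot mu Rxy psi <=
  \int[rho]_y (phi y)%:E - \int[mu]_x (phip x)%:E.
Proof.
move=> [mpsi [ipsi [psip [hpsi ipsip]]]] iphi iphip.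
rewrite (@Fpot_eq psi psip mpsi hpsi).
have mpsip := hpsi.1.
have [i1 e1] := @marg_Y psi mpsi ipsi.
have [i2 e2] := @marg_Y phi mphi iphi.
have [i3 e3] := @marg_X psip mpsip ipsip.
have [i4 e4] := @marg_X phip mphip iphip.
have [i5 e5] := int1pi.
pose k := fun z : X * Y => ((psi z.2 - phi z.2) - (psip z.1 - phip z.1))%R.
have kE : (fun z => (k z)%:E) = (fun z => ((psi z.2)%:E - (phi z.2)%:E) -
                                          ((psip z.1)%:E - (phip z.1)%:E)).
  by apply/funext => z; rewrite /k !EFinB.
have ik : pi.-integrable setT (fun z => (k z)%:E).
  by rewrite kE; apply: integrableB => //; apply: integrableB.
have Ik : \int[pi]_z (k z)%:E = (\int[rho]_y (psi y)%:E - \int[rho]_y (phi y)%:E)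
    - (\int[mu]_x (psip x)%:E - \int[mu]_x (phip x)%:E).
  rewrite kE integralB //; try by apply: integrableB.
  by rewrite !integralB // e1 e2 e3 e4.
have mk : measurable_fun setT k.
  apply: measurable_funB; apply: measurable_funB.
  + exact: measurableT_comp mpsi measurable_snd.
  + exact: measurableT_comp mphi measurable_snd.
  + exact: measurableT_comp mpsip measurable_fst.
  + exact: measurableT_comp mphip measurable_fst.
have Iek : \int[pi]_z (expR (k z))%:E = 1 by exact: pi_expk.
have iek : pi.-integrable setT (fun z => (expR (k z))%:E).
  apply/integrableP; split.
    by apply/measurable_EFinP; apply: measurableT_comp.
  under eq_integral do rewrite gee0_abs ?lee_fin ?expR_ge0 //.
  by rewrite Iek ltry.
have : \int[pi]_z (k z)%:E <= \int[pi]_z ((expR (k z))%:E - 1%:E).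
  apply: le_integral => //; first exact: integrableB.
  move=> z _; rewrite -EFinB lee_fin; have := expR_ge1Dx (k z); lra.
rewrite integralB // Iek e5 subee // Ik.
have [a ->] := @fin_int _ _ _ _ ipsi.
have [b ->] := @fin_int _ _ _ _ iphi.
have [c ->] := @fin_int _ _ _ _ ipsip.
have [e ->] := @fin_int _ _ _ _ iphip.
rewrite -!EFinB !lee_fin; lra.
Qed.

Lemma Fstar_eq : rho.-integrable setT (EFin \o phi) -> mu.-integrable setT (EFin \o phip) ->
  Fstar mu Rxy rho = \int[rho]_y (phi y)%:E - \int[mu]_x (phip x)%:E.
Proof.
move=> iphi iphip; apply/eqP; rewrite eq_le; apply/andP; split.
- by apply: ge_ereal_sup => _ [psi hpsi <-]; exact: gibbs.
- apply: ereal_sup_ubound; exists phi; last by rewrite (@Fpot_eq phi phip mphi hp).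
  by split => //; split => //; exists phip.
Qed.

End pi.

Lemma relent_eq (phi phit : Y -> R) (phip phitp : X -> R)
  (pi pit : {measure set (X * Y)%type -> \bar R}) (rhot : {measure set Y -> \bar R}) :
  measurable_fun setT phi -> measurable_fun setT phit ->
  is_plus mu Rxy phi phip -> is_plus mu Rxy phit phitp ->
  (forall A, measurable A ->
     pi A = \int[Rxy]_(z in A) (expR (phi z.2 - phip z.1))%:E) ->
  (forall A, measurable A ->
     pit A = \int[Rxy]_(z in A) (expR (phit z.2 - phitp z.1))%:E) ->
  (forall B, measurable B -> rhot B = pit (setT `*` B)) ->
  mu.-integrable setT (EFin \o phip) -> mu.-integrable setT (EFin \o phitp) ->
  rhot.-integrable setT (EFin \o phi) -> rhot.-integrable setT (EFin \o phit) ->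
  relent pit pi = (\int[rhot]_y (phit y)%:E - \int[rhot]_y (phi y)%:E)
                  - (\int[mu]_x (phitp x)%:E - \int[mu]_x (phip x)%:E).
Proof.
move=> mphi mphit hp hpt hpi hpit hrhot iphip iphitp iphi iphit.
have mphip := hp.1; have mphitp := hpt.1.
pose k := fun z : X * Y => ((phit z.2 - phi z.2) - (phitp z.1 - phip z.1))%R.
have mk : measurable_fun setT k.
  apply: measurable_funB; apply: measurable_funB.
  + exact: measurableT_comp mphit measurable_snd.
  + exact: measurableT_comp mphi measurable_snd.
  + exact: measurableT_comp mphitp measurable_fst.
  + exact: measurableT_comp mphip measurable_fst.
pose f0 := fun z => expR (k z).
have mf0 : measurable_fun setT f0 by apply: measurableT_comp.
have dens : forall A, measurable A -> pit A = \int[pi]_(z in A) (f0 z)%:E.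
  move=> A mA; rewrite hpit // [LHS]integral_mkcond [RHS]integral_mkcond !epatch_indic.
  rewrite (@pi_dens phi phip pi mphi hp hpi); last 2 first.
  - apply: emeasurable_funM; apply/measurable_EFinP => //; exact: measurable_indic.
  - by move=> z; rewrite /= -EFinM lee_fin mulr_ge0 ?expR_ge0 // indicE.
  apply: eq_integral => z _ /=; rewrite -!EFinM; congr EFin.
  rewrite mulrAC /f0 -expRD; congr (_ * _)%R; congr expR; rewrite /k; ring.
have pitT : pit setT = 1.
  rewrite -setXTT; rewrite hpit; last exact: measurableX.
  have := @pi_X phit phitp pit mphit hpt hpit setT measurableT.
  rewrite hpit; last exact: measurableX.
  by move=> ->; exact: probability_setT.
have fint : pi.-integrable setT (EFin \o f0).
  apply/integrableP; split; first by apply/measurable_EFinP.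
  under eq_integral do rewrite /= ger0_norm ?expR_ge0 //.
  by rewrite -dens // pitT ltry.
rewrite /relent; case: pselect => [h|nh]; last first.
  by exfalso; apply: nh; exists f0; split => //; split => // z; exact: expR_ge0.
case: cid => q [mq [q0 hq]] /=.
have hae : ae_eq pi setT (EFin \o f0) (EFin \o q).
  apply: integral_ae_eq => //; first by apply/measurable_EFinP.
  by move=> E _ mE; rewrite -dens // hq.
have dom : pit `<< pi.
  apply/null_content_dominatesP => A mA piA; rewrite dens //.
  apply: null_set_integral => //; apply/measurable_EFinP.
  exact: measurable_funTS.
have hae' := null_dominates_ae_eq measurableT dom hae.
transitivity (\int[pit]_z (k z)%:E).
  apply: ae_eq_integral => //.
  - apply/measurable_EFinP; apply: measurableT_comp => //; exact: measurable_ln.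
  - by apply/measurable_EFinP.
  apply: filterS hae' => z hh hz; move: (hh hz) => /= [] <-.
  by rewrite /f0 expRK.
have [i1 e1] := @marg_Y pit rhot hrhot phit mphit iphit.
have [i2 e2] := @marg_Y pit rhot hrhot phi mphi iphi.
have [i3 e3] := @marg_X phit phitp pit mphit hpt hpit phitp mphitp iphitp.
have [i4 e4] := @marg_X phit phitp pit mphit hpt hpit phip mphip iphip.
have kE : (fun z => (k z)%:E) = (fun z => ((phit z.2)%:E - (phi z.2)%:E) -
                                          ((phitp z.1)%:E - (phip z.1)%:E)).
  by apply/funext => z; rewrite /k !EFinB.
rewrite kE integralB //; try by apply: integrableB.
by rewrite !integralB // e1 e2 e3 e4.
Qed.


End main.

Theorem lemma3p5 (R : realType) (d1 d2 : measure_display)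
  (X : measurableType d1) (Y : measurableType d2)
  (mu : probability X R) (nu : probability Y R)
  (Rxy : {measure set (X * Y)%type -> \bar R})
  (phi phit : Y -> R) (phip phitp : X -> R)
  (pi pit : {measure set (X * Y)%type -> \bar R})
  (rho rhot : {measure set Y -> \bar R}) :
  measurable_fun setT phi -> measurable_fun setT phit ->
  is_plus mu Rxy phi phip -> is_plus mu Rxy phit phitp ->
  mu.-integrable setT (EFin \o phip) -> mu.-integrable setT (EFin \o phitp) ->
  (forall A, measurable A ->
     pi A = \int[Rxy]_(z in A) (expR (phi z.2 - phip z.1))%:E) ->
  (forall A, measurable A ->
     pit A = \int[Rxy]_(z in A) (expR (phit z.2 - phitp z.1))%:E) ->
  (forall B, measurable B -> rho B = pi (setT `*` B)) ->
  (forall B, measurable B -> rhot B = pit (setT `*` B)) ->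
  rho.-integrable setT (EFin \o phi) -> rho.-integrable setT (EFin \o phit) ->
  rhot.-integrable setT (EFin \o phi) -> rhot.-integrable setT (EFin \o phit) ->
  let Fbreg := Fpot mu Rxy phi - Fpot mu Rxy phit
               - \int[rhot]_y (phi y - phit y)%:E in
  let Fstarbreg := Fstar mu Rxy rhot - Fstar mu Rxy rho
               - (\int[rhot]_y (phi y)%:E - \int[rho]_y (phi y)%:E) in
  Fbreg = Fstarbreg /\ Fstarbreg = relent pit pi.
Proof.
move=> mphi mphit hp hpt iphip iphitp hpi hpit hrho hrhot rphi rphit rtphi rtphit
  Fbreg Fstarbreg.
rewrite /Fstarbreg /Fbreg.
rewrite (@Fstar_eq R d1 d2 X Y mu Rxy phit phitp pit mphit hpt hpit rhot hrhot rtphit iphitp).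
rewrite (@Fstar_eq R d1 d2 X Y mu Rxy phi phip pi mphi hp hpi rho hrho rphi iphip).
rewrite (@Fpot_eq R d1 d2 X Y mu Rxy phi phip mphi hp).
rewrite (@Fpot_eq R d1 d2 X Y mu Rxy phit phitp mphit hpt).
rewrite (@relent_eq R d1 d2 X Y mu Rxy phi phit phip phitp pi pit rhot mphi mphit
  hp hpt hpi hpit hrhot iphip iphitp rtphi rtphit).
under eq_integral do rewrite EFinB.
rewrite integralB_EFin //.
have [a ->] := @fin_int _ _ _ _ _ rphi.
have [c ->] := @fin_int _ _ _ _ _ rtphi.
have [e ->] := @fin_int _ _ _ _ _ rtphit.
have [P ->] := @fin_int _ _ _ _ _ iphip.
have [Q ->] := @fin_int _ _ _ _ _ iphitp.
by rewrite -!EFinB; split; congr EFin; lra.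
Qed.
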